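(* There is a universal constant $C<\infty$ such that for every power of two $L\ge2$, every $l\in\{1,2,4,\dots,\frac L2\}$ and every $\hat D\ge C$, $$\ln\#\Big\{\bar h\ :\ \max_{\rho}\Big(\frac{l}{\rho}\Big)^2\frac{D(\bar h_\rho)}{L}<\hat D\Big\}\le C\,\frac{L}{l}\,\ln\hat D,$$ where $\bar h$ ranges over functions $\bar h:\{0,2l,4l,\dots,L\}\to2l\mathbb Z$ with $\bar h(0)=\bar h(L)=0$, and $\rho$ ranges over the dyadic scales $\{2l,4l,\dots,\frac L2\}$ (a maximum over the empty set being $0$).
   Context: Each such $\bar h$ is identified with the function on $\{0,\dots,L\}$ that agrees with $\bar h$ on $2l\mathbb Z\cap[0,L]$ and is affine in between. For a function $h$ on $\{0,\dots,L\}$ and dyadic $\rho\in\{1,\dots,L\}$, $h_{\ge\rho}$ is the function on $\{0,\dots,L\}$ agreeing with $h$ on $\rho\mathbb Z\cap[0,L]$ and affine between consecutive points of $\rho\mathbb Z\cap[0,L]$; for $\rho\le L/2$, $h_\rho:=h_{\ge\rho}-h_{\ge2\rho}$. $D(h)=\frac12\sum_{x=1}^L(h(x)-h(x-1))^2$. *)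

(* Defs.v *)
From Stdlib Require Import Reals Lra Lia ZArith Arith List.
Open Scope R_scope.

(* h_{>= rho}: agrees with h on rho*Z and is affine between consecutive
   points of rho*Z (functions on {0..L} are modelled as nat -> R). *)
Definition interp (rho : nat) (h : nat -> R) : nat -> R :=
  fun x =>
    let a := ((x / rho) * rho)%nat in
    let t := (x mod rho)%nat in
    h a + (INR t / INR rho) * (h (a + rho)%nat - h a).

Definition hband (rho : nat) (h : nat -> R) : nat -> R :=
  fun x => interp rho h x - interp (2 * rho) h x.

Definition Dir (L : nat) (h : nat -> R) : R :=
  / 2 * sum_f_R0 (fun i => (h (S i) - h i) ^ 2) (L - 1).

(* A coarse function hbar : {0,2l,...,L} -> 2l Z with L = 2^n, l = 2^k is
   encoded by the list s of integers with hbar(j*2l) = 2l * s_j,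
   j = 0 .. L/(2l). *)
Definition is_hbar (n k : nat) (s : list Z) : Prop :=
  length s = (2 ^ n / 2 ^ (S k) + 1)%nat /\
  nth 0 s 0%Z = 0%Z /\
  nth (2 ^ n / 2 ^ (S k)) s 0%Z = 0%Z.

Definition hbar_ext (k : nat) (s : list Z) : nat -> R :=
  interp (2 ^ S k) (fun x => INR (2 ^ S k) * IZR (nth (x / 2 ^ S k) s 0%Z)).

Definition maxR (xs : list R) : R := fold_right Rmax 0 xs.

(* max over dyadic rho in {2l, 4l, ..., L/2} = {2^j : k+1 <= j <= n-1}
   of (l/rho)^2 D(h_rho)/L *)
Definition scale_energy (n k : nat) (h : nat -> R) : R :=
  maxR (map (fun j => (INR (2 ^ k) / INR (2 ^ j)) ^ 2
                      * Dir (2 ^ n) (hband (2 ^ j) h) / INR (2 ^ n))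
            (seq (S k) (n - 1 - k))).

(* Main.v *)
Require Import Defs.
From Stdlib Require Import Reals Lra Lia ZArith Arith List.
Open Scope R_scope.

Definition lsum {A : Type} (f : A -> R) (l : list A) : R :=
  fold_right (fun a acc => f a + acc) 0 l.

Lemma lsum_app {A} (f : A -> R) l1 l2 : lsum f (l1 ++ l2) = lsum f l1 + lsum f l2.
Proof. induction l1; simpl; [lra|]. rewrite IHl1; lra. Qed.

Lemma lsum_map {A B} (f : B -> R) (g : A -> B) l : lsum f (map g l) = lsum (fun x => f (g x)) l.
Proof. induction l; simpl; auto. rewrite IHl; auto. Qed.

Lemma lsum_flat_map {A B} (f : B -> R) (g : A -> list B) l :
  lsum f (flat_map g l) = lsum (fun x => lsum f (g x)) l.
Proof. induction l; simpl; auto. rewrite lsum_app, IHl; auto. Qed.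

Lemma lsum_scal {A} (c : R) (f : A -> R) l : lsum (fun x => c * f x) l = c * lsum f l.
Proof. induction l; simpl; [lra|]. rewrite IHl; lra. Qed.

Lemma lsum_ext {A} (f g : A -> R) l : (forall x, In x l -> f x = g x) -> lsum f l = lsum g l.
Proof. induction l; simpl; intros H; auto. rewrite H, IHl; auto. Qed.

Lemma lsum_le {A} (f g : A -> R) l : (forall x, In x l -> f x <= g x) -> lsum f l <= lsum g l.
Proof. induction l; simpl; intros H; [lra|]. pose proof (H a (or_introl eq_refl)).
  assert (lsum f l <= lsum g l) by (apply IHl; auto). lra. Qed.

Lemma lsum_nonneg {A} (f : A -> R) l : (forall x, 0 <= f x) -> 0 <= lsum f l.
Proof. intros H; induction l; simpl; [lra|]. pose proof (H a); lra. Qed.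

Lemma lsum_const {A} (c : R) (l : list A) : lsum (fun _ => c) l = INR (length l) * c.
Proof. induction l; simpl length; [simpl; lra|]. rewrite S_INR; simpl; rewrite IHl. lra. Qed.

Lemma lsum_seq_shift (F : nat -> R) c d b :
  lsum F (seq (c + d) b) = lsum (fun t => F (c + t)%nat) (seq d b).
Proof. revert d; induction b; intros d; simpl; auto.
  replace (S (c + d)) with (c + S d)%nat by lia. rewrite IHb; auto. Qed.

Lemma lsum_block (F : nat -> R) a b :
  lsum F (seq 0 (a * b)) = lsum (fun q => lsum (fun t => F (q * b + t)%nat) (seq 0 b)) (seq 0 a).
Proof. induction a; [simpl; auto|].
  replace (S a * b)%nat with (a * b + b)%nat by lia.
  rewrite seq_app, lsum_app, IHa, (seq_S a 0), lsum_app. simpl.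
  rewrite <- (lsum_seq_shift F (a*b) 0 b). rewrite Nat.add_0_r. lra. Qed.

Lemma sum_f_R0_lsum (G : nat -> R) m : sum_f_R0 G m = lsum G (seq 0 (S m)).
Proof. induction m; [simpl; lra|]. simpl sum_f_R0. rewrite IHm. rewrite (seq_S (S m) 0), lsum_app. simpl. lra. Qed.

Lemma lsum_subset {A} (dec : forall x y : A, {x = y} + {x <> y}) (f : A -> R) (T U : list A) :
  (forall x, 0 <= f x) -> NoDup T -> incl T U -> lsum f T <= lsum f U.
Proof.
  intros Hf; revert U; induction T as [|a T IH]; intros U HN HI; simpl.
  - apply lsum_nonneg; auto.
  - inversion HN; subst.
    destruct (in_split a U (HI a (or_introl eq_refl))) as [U1 [U2 ->]].
    rewrite lsum_app. simpl.
    assert (lsum f T <= lsum f (U1 ++ U2)).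
    { apply IH; auto. intros b Hb. assert (In b (U1 ++ a :: U2)) by (apply HI; right; auto).
      apply in_app_or in H. apply in_or_app. destruct H as [H|[H|H]]; auto. subst; contradiction. }
    rewrite lsum_app in H. lra.
Qed.

Fixpoint boxes (Rg : list Z) (m : nat) : list (list Z) :=
  match m with
  | O => nil :: nil
  | S m => flat_map (fun x => map (cons x) (boxes Rg m)) Rg
  end.

Lemma in_boxes Rg m t : length t = m -> (forall x, In x t -> In x Rg) -> In t (boxes Rg m).
Proof.
  revert t; induction m; intros t Hl Hx; destruct t as [|x t]; simpl in *; try lia; auto.
  apply in_flat_map. exists x. split; [apply Hx; auto|]. apply in_map. apply IHm; auto.
Qed.

Fixpoint prodw (gs : list (Z -> R)) (t : list Z) : R :=
  match gs, t with
  | g :: gs', x :: t' => g x * prodw gs' t'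
  | _, _ => 1
  end.

Definition boxprod (Rg : list Z) (gs : list (Z -> R)) : R :=
  fold_right (fun g acc => lsum g Rg * acc) 1 gs.

Lemma lsum_boxes Rg gs : lsum (prodw gs) (boxes Rg (length gs)) = boxprod Rg gs.
Proof.
  induction gs as [|g gs IH]; simpl; [lra|].
  rewrite lsum_flat_map.
  transitivity (lsum (fun x => boxprod Rg gs * g x) Rg).
  - apply lsum_ext; intros x _. rewrite lsum_map. simpl.
    rewrite lsum_scal, IH. lra.
  - rewrite lsum_scal. lra.
Qed.

Lemma prodw_nonneg gs t : (forall g, In g gs -> forall x, 0 <= g x) -> 0 <= prodw gs t.
Proof.
  revert t; induction gs as [|g gs IH]; intros t H; destruct t; simpl; try lra.
  apply Rmult_le_pos; [apply H; left; auto| apply IH; intros; apply H; right; auto].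
Qed.

Lemma prodw_app a b c d : length a = length c -> prodw (a ++ b) (c ++ d) = prodw a c * prodw b d.
Proof.
  revert c; induction a; intros c Hl; destruct c; simpl in *; try lia; [lra|].
  rewrite IHa by lia. lra.
Qed.

Lemma count_bound Rg gs (T : list (list Z)) :
  (forall g, In g gs -> forall x, 0 <= g x) ->
  NoDup T ->
  (forall t, In t T -> length t = length gs /\ (forall x, In x t -> In x Rg) /\ 1 <= prodw gs t) ->
  INR (length T) <= boxprod Rg gs.
Proof.
  intros Hg HN HT.
  rewrite <- lsum_boxes.
  apply Rle_trans with (lsum (prodw gs) T).
  - rewrite <- (Rmult_1_r (INR (length T))), <- lsum_const.
    apply lsum_le. intros t Ht; apply HT; auto.
  - apply lsum_subset; auto.
    + apply list_eq_dec, Z.eq_dec.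
    + intros; apply prodw_nonneg; auto.
    + intros t Ht. destruct (HT t Ht) as [H1 [H2 _]]. apply in_boxes; auto.
Qed.

Lemma exp_le x y : x <= y -> exp x <= exp y.
Proof. intros [H|H]; [left; apply exp_increasing; auto| subst; lra]. Qed.

Lemma block_weight (c : R) (b : list Z) :
  1 <= c ->
  exp (INR (length b) - (INR (length b) + lsum (fun x => IZR x ^ 2) b) / c)
  <= prodw (repeat (fun x => c / (1 + IZR x ^ 2)) (length b)) b.
Proof.
  intros Hc. induction b as [|x b IH].
  - simpl. replace (0 - (0 + 0) / c) with 0 by (field; lra). rewrite exp_0; lra.
  - change (length (x :: b)) with (S (length b)).
    change (repeat ?g (S ?n)) with (g :: repeat g n).
    change (prodw (?g :: ?gs) (x :: b)) with (g x * prodw gs b).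
    change (lsum ?f (x :: b)) with (f x + lsum f b). rewrite S_INR.
    set (y := (1 + IZR x ^ 2) / c).
    assert (Hy : 0 < y). { unfold y. apply Rdiv_lt_0_compat; [|lra]. pose proof (pow2_ge_0 (IZR x)); lra. }
    replace (INR (length b) + 1 - (INR (length b) + 1 + (IZR x ^ 2 + lsum (fun x0 : Z => IZR x0 ^ 2) b)) / c)
      with ((1 - y) + (INR (length b) - (INR (length b) + lsum (fun x0 : Z => IZR x0 ^ 2) b) / c))
      by (unfold y; field; lra).
    rewrite exp_plus.
    apply Rmult_le_compat; try (left; apply exp_pos); auto.
    replace (c / (1 + IZR x ^ 2)) with (/ y) by (unfold y; field; pose proof (pow2_ge_0 (IZR x)); lra).
    pose proof (exp_ineq1_le (y - 1)).
    assert (exp (1 - y) * exp (y - 1) = 1) by (rewrite <- exp_plus; replace (1 - y + (y - 1)) with 0 by ring; apply exp_0).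
    assert (0 < exp (1 - y)) by apply exp_pos.
    apply Rmult_le_reg_l with y; auto. rewrite Rinv_r by lra. nra.
Qed.

Lemma block_weight1 (c : R) (b : list Z) :
  1 <= c -> lsum (fun x => IZR x ^ 2) b <= INR (length b) * (c - 1) ->
  1 <= prodw (repeat (fun x => c / (1 + IZR x ^ 2)) (length b)) b.
Proof.
  intros Hc Hs. eapply Rle_trans; [|apply block_weight; auto].
  rewrite <- exp_0. apply exp_le.
  assert ((INR (length b) + lsum (fun x : Z => IZR x ^ 2) b) / c <= INR (length b)).
  { apply Rmult_le_reg_r with c; [lra|]. unfold Rdiv; rewrite Rmult_assoc, Rinv_l by lra. lra. }
  lra.
Qed.


Definition rangeZ (K : nat) : list Z :=
  map (fun i => (Z.of_nat i - Z.of_nat K)%Z) (seq 0 (2 * K + 1)).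

Lemma in_rangeZ K x : (- Z.of_nat K <= x <= Z.of_nat K)%Z -> In x (rangeZ K).
Proof.
  intros H. unfold rangeZ. apply in_map_iff. exists (Z.to_nat (x + Z.of_nat K)).
  split; [lia|]. apply in_seq. lia.
Qed.

Lemma bound_exists (T : list (list Z)) : exists K, forall t, In t T -> forall x, In x t -> (- Z.of_nat K <= x <= Z.of_nat K)%Z.
Proof.
  induction T as [|t T [K HK]].
  - exists 0%nat; intros t [].
  - assert (exists K', forall x, In x t -> (- Z.of_nat K' <= x <= Z.of_nat K')%Z) as [K' HK'].
    { induction t as [|a t [K1 H1]].
      - exists 0%nat; intros x [].
      - exists (Nat.max K1 (Z.to_nat (Z.abs a))). intros x [->|Hx]; [lia|]. specialize (H1 x Hx); lia. }
    exists (Nat.max K K'). intros t0 [->|Ht] x Hx.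
    + specialize (HK' x Hx); lia.
    + specialize (HK t0 Ht x Hx); lia.
Qed.

Lemma lsum_telescope (psi : nat -> R) a m :
  lsum (fun i => psi (S i) - psi i) (seq a m) = psi (a + m)%nat - psi a.
Proof.
  revert a; induction m; intros a; simpl.
  - rewrite Nat.add_0_r; lra.
  - rewrite IHm. replace (S a + m)%nat with (a + S m)%nat by lia. lra.
Qed.

Definition phi (x : R) : R := 3 * x / (1 + Rabs x).

Lemma phi_bound x : -3 <= phi x <= 3.
Proof.
  unfold phi. pose proof (Rabs_pos x).
  assert (0 < 1 + Rabs x) by lra.
  split.
  - apply Rmult_le_reg_r with (1 + Rabs x); auto. unfold Rdiv; rewrite Rmult_assoc, Rinv_l by lra.
    destruct (Rle_dec 0 x); [rewrite Rabs_right by lra | rewrite Rabs_left by lra]; lra.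
  - apply Rmult_le_reg_r with (1 + Rabs x); auto. unfold Rdiv; rewrite Rmult_assoc, Rinv_l by lra.
    destruct (Rle_dec 0 x); [rewrite Rabs_right by lra | rewrite Rabs_left by lra]; lra.
Qed.

Lemma phi_step (z : Z) : 1 / (1 + IZR z ^ 2) <= phi (IZR z + 1) - phi (IZR z).
Proof.
  unfold phi. destruct (Z_le_gt_dec 0 z) as [Hz|Hz].
  - apply IZR_le in Hz.
    rewrite (Rabs_right (IZR z)) by lra. rewrite Rabs_right by lra.
    set (x := IZR z) in *.
    assert (Hx : x = 0 \/ 1 <= x).
    { destruct (Z.eq_dec z 0) as [->|]; [left; reflexivity| right; unfold x; apply IZR_le; apply le_IZR in Hz; lia]. }
    replace (3 * (x + 1) / (1 + (x + 1)) - 3 * x / (1 + x)) with (3 / ((x+1)*(x+2))) by (field; lra).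
    apply Rmult_le_reg_r with ((1 + x^2) * ((x+1)*(x+2))). { apply Rmult_lt_0_compat; nra. }
    replace (1 / (1 + x ^ 2) * ((1 + x ^ 2) * ((x + 1) * (x + 2)))) with ((x+1)*(x+2)) by (field; nra).
    replace (3 / ((x + 1) * (x + 2)) * ((1 + x ^ 2) * ((x + 1) * (x + 2)))) with (3 * (1 + x^2)) by (field; nra).
    destruct Hx; nra.
  - assert (Hz' : IZR z <= -1) by (apply IZR_le; lia).
    rewrite (Rabs_left (IZR z)) by lra.
    set (x := IZR z) in *.
    destruct (Req_dec x (-1)) as [Hm|Hm].
    + rewrite Hm. replace (-1 + 1) with 0 by ring. rewrite Rabs_R0.
      replace (3 * 0 / (1 + 0) - 3 * -1 / (1 + - -1)) with (3/2) by field.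
      replace (1 / (1 + (-1) ^ 2)) with (1/2) by field. lra.
    + assert (x <= -2). { unfold x in *. apply IZR_le. assert (z <> (-1)%Z) by (intro; subst; apply Hm; reflexivity). lia. }
      rewrite Rabs_left by lra.
      replace (3 * (x + 1) / (1 + - (x + 1)) - 3 * x / (1 + - x)) with (3 / ((-x)*(1-x))) by (field; lra).
      apply Rmult_le_reg_r with ((1 + x^2) * ((-x)*(1-x))). { apply Rmult_lt_0_compat; nra. }
      replace (1 / (1 + x ^ 2) * ((1 + x ^ 2) * ((-x) * (1 - x)))) with ((-x)*(1-x)) by (field; nra).
      replace (3 / ((-x) * (1 - x)) * ((1 + x ^ 2) * ((-x) * (1 - x)))) with (3 * (1 + x^2)) by (field; nra).
      nra.
Qed.

Lemma rangeZ_sum K : lsum (fun x => 1 / (1 + IZR x ^ 2)) (rangeZ K) <= 6.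
Proof.
  unfold rangeZ. rewrite lsum_map.
  set (psi := fun i : nat => phi (IZR (Z.of_nat i - Z.of_nat K))).
  apply Rle_trans with (lsum (fun i => psi (S i) - psi i) (seq 0 (2 * K + 1))).
  - apply lsum_le. intros i _. unfold psi.
    replace (IZR (Z.of_nat (S i) - Z.of_nat K)) with (IZR (Z.of_nat i - Z.of_nat K) + 1).
    + apply phi_step.
    + rewrite <- plus_IZR. f_equal. lia.
  - rewrite lsum_telescope. unfold psi. pose proof (phi_bound (IZR (Z.of_nat (0 + (2 * K + 1)) - Z.of_nat K))).
    pose proof (phi_bound (IZR (Z.of_nat 0 - Z.of_nat K))). lra.
Qed.

Lemma interp_at (rho m t : nat) (h : nat -> R) : (t < rho)%nat ->
  interp rho h (m * rho + t) = h (m * rho)%nat + INR t / INR rho * (h (m * rho + rho)%nat - h (m * rho)%nat).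
Proof.
  intros Ht. unfold interp.
  assert (Hd : ((m * rho + t) / rho)%nat = m). { symmetry. apply (Nat.div_unique _ _ _ t); lia. }
  assert (Hm : ((m * rho + t) mod rho)%nat = t). { symmetry. apply (Nat.mod_unique _ _ m); lia. }
  rewrite Hd, Hm. reflexivity.
Qed.

Definition vq (rho q : nat) (h : nat -> R) : R :=
  h (q * (2 * rho) + rho)%nat - (h (q * (2 * rho))%nat + h (q * (2 * rho) + 2 * rho)%nat) / 2.

Lemma hband_at (rho q t : nat) (h : nat -> R) : (1 <= rho)%nat -> (t <= rho)%nat ->
  hband rho h (q * (2 * rho) + t) = INR t / INR rho * vq rho q h.
Proof.
  intros Hr Ht. unfold hband, vq.
  assert (HR : 0 < INR rho) by (apply lt_0_INR; lia).
  rewrite interp_at by lia. rewrite mult_INR. simpl (INR 2).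
  destruct (Nat.eq_dec t rho) as [->|Hne].
  - replace (q * (2 * rho) + rho)%nat with ((2 * q + 1) * rho + 0)%nat by ring.
    rewrite interp_at by lia. simpl (INR 0).
    replace ((2 * q + 1) * rho)%nat with (q * (2 * rho) + rho)%nat by ring.
    rewrite !Nat.add_0_r. field; lra.
  - replace (q * (2 * rho) + t)%nat with ((2 * q) * rho + t)%nat by ring.
    rewrite interp_at by lia.
    replace ((2 * q) * rho)%nat with (q * (2 * rho))%nat by ring.
    field; lra.
Qed.

Lemma Dir_lower (rho M : nat) (h : nat -> R) : (1 <= rho)%nat -> (1 <= M)%nat ->
  / 2 * lsum (fun q => (vq rho q h) ^ 2 / INR rho) (seq 0 M) <= Dir (M * (2 * rho)) (hband rho h).
Proof.
  intros Hr HM. unfold Dir.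
  rewrite sum_f_R0_lsum. replace (S (M * (2 * rho) - 1)) with (M * (2 * rho))%nat by nia.
  apply Rmult_le_compat_l; [lra|].
  rewrite lsum_block. apply lsum_le. intros q _.
  replace (seq 0 (2 * rho)) with (seq 0 (rho + rho)) by (f_equal; lia).
  rewrite seq_app, lsum_app.
  assert (0 <= lsum (fun t : nat => (hband rho h (S (q * (2 * rho) + t)) - hband rho h (q * (2 * rho) + t)) ^ 2) (seq (0 + rho) rho))
    by (apply lsum_nonneg; intros; apply pow2_ge_0).
  assert (HR : 0 < INR rho) by (apply lt_0_INR; lia).
  rewrite (lsum_ext _ (fun _ => (vq rho q h / INR rho) ^ 2)).
  - rewrite lsum_const, length_seq. replace (INR rho * (vq rho q h / INR rho) ^ 2) with (vq rho q h ^ 2 / INR rho) by (field; lra).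
    lra.
  - intros t Ht. apply in_seq in Ht.
    replace (S (q * (2 * rho) + t)) with (q * (2 * rho) + S t)%nat by lia.
    rewrite !hband_at by lia. rewrite S_INR. f_equal. field. lra.
Qed.

Lemma hbar_val k s j : hbar_ext k s (j * 2 ^ S k)%nat = INR (2 ^ S k) * IZR (nth j s 0%Z).
Proof.
  assert (2 ^ S k <> 0)%nat by (apply Nat.pow_nonzero; lia).
  unfold hbar_ext. rewrite <- (Nat.add_0_r (j * 2 ^ S k)) at 1.
  rewrite interp_at by lia.
  rewrite Nat.div_mul by lia.
  simpl (INR 0). lra.
Qed.

Definition Sv (s : list Z) (i : nat) : Z := nth i s 0%Z.
Definition dq (s : list Z) (p q : nat) : Z :=
  (2 * Sv s ((2 * q + 1) * 2 ^ p) - Sv s (2 * q * 2 ^ p) - Sv s ((2 * q + 2) * 2 ^ p))%Z.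
Definition Mlev (P p : nat) : nat := 2 ^ (P - 1 - p).
Definition blk (P : nat) (s : list Z) (p : nat) : list Z := map (dq s p) (seq 0 (Mlev P p)).
Definition Phi (P : nat) (s : list Z) : list Z := flat_map (blk P s) (seq 0 P).

Lemma app_inv_len {A} (l1 l2 l1' l2' : list A) : length l1 = length l1' -> l1 ++ l2 = l1' ++ l2' -> l1 = l1' /\ l2 = l2'.
Proof.
  revert l1'; induction l1; intros l1' Hl He; destruct l1'; simpl in *; try lia; auto.
  injection He; intros He' ->. destruct (IHl1 l1') as [-> ->]; auto.
Qed.

Lemma flat_map_eq_inv {A B} (f g : A -> list B) l :
  (forall x, length (f x) = length (g x)) -> flat_map f l = flat_map g l -> forall x, In x l -> f x = g x.
Proof.
  intros Hl; induction l; simpl; intros He x Hx; [contradiction|].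
  destruct (app_inv_len _ _ _ _ (Hl a) He) as [H1 H2].
  destruct Hx as [->|Hx]; auto.
Qed.

Lemma map_eq_inv {A B} (f g : A -> B) l : map f l = map g l -> forall x, In x l -> f x = g x.
Proof.
  induction l; simpl; intros He x Hx; [contradiction|]. injection He; intros.
  destruct Hx as [->|Hx]; auto.
Qed.

Lemma Phi_inj P s s' :
  length s = (2 ^ P + 1)%nat -> length s' = (2 ^ P + 1)%nat ->
  Sv s 0 = 0%Z -> Sv s (2 ^ P) = 0%Z -> Sv s' 0 = 0%Z -> Sv s' (2 ^ P) = 0%Z ->
  Phi P s = Phi P s' -> s = s'.
Proof.
  intros L1 L2 A1 B1 A2 B2 HE.
  assert (Hd : forall p q, (p < P)%nat -> (q < 2 ^ (P - 1 - p))%nat -> dq s p q = dq s' p q).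
  { intros p q Hp Hq. unfold Phi in HE.
    assert (Hb := flat_map_eq_inv _ _ _ (fun x => eq_trans (length_map _ _) (eq_sym (length_map _ _))) HE p).
    assert (Hin : In p (seq 0 P)) by (apply in_seq; lia).
    specialize (Hb Hin). unfold blk in Hb. apply (map_eq_inv _ _ _ Hb).
    apply in_seq. unfold Mlev. lia. }
  assert (Hm : forall m, (m <= P)%nat -> forall j, (j <= 2 ^ m)%nat -> Sv s (j * 2 ^ (P - m)) = Sv s' (j * 2 ^ (P - m))).
  { induction m; intros Hm j Hj.
    - simpl in Hj. rewrite Nat.sub_0_r. destruct j as [|[|j]]; try lia.
      + simpl. congruence.
      + rewrite Nat.mul_1_l. congruence.
    - assert (HP : (2 ^ (P - m) = 2 * 2 ^ (P - S m))%nat).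
      { replace (P - m)%nat with (S (P - S m)) by lia. apply Nat.pow_succ_r'. }
      rewrite Nat.pow_succ_r' in Hj.
      destruct (Nat.Even_or_Odd j) as [[j' ->]|[j' ->]].
      + replace (2 * j' * 2 ^ (P - S m))%nat with (j' * 2 ^ (P - m))%nat by (rewrite HP; ring).
        apply IHm; lia.
      + pose proof (Hd (P - S m)%nat j' ltac:(lia) ltac:(replace (P - 1 - (P - S m))%nat with m by lia; lia)) as H.
        unfold dq in H.
        assert (E0 := IHm ltac:(lia) j' ltac:(lia)).
        assert (E2 := IHm ltac:(lia) (S j') ltac:(lia)).
        replace (2 * j' * 2 ^ (P - S m))%nat with (j' * 2 ^ (P - m))%nat in H by (rewrite HP; ring).
        replace ((2 * j' + 2) * 2 ^ (P - S m))%nat with (S j' * 2 ^ (P - m))%nat in H by (rewrite HP; ring).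
        lia. }
  apply nth_ext with 0%Z 0%Z; [congruence|].
  intros i Hi. specialize (Hm P (le_n _) i ltac:(lia)). rewrite Nat.sub_diag, Nat.pow_0_r, Nat.mul_1_r in Hm.
  exact Hm.
Qed.

Lemma maxR_ge x xs : In x xs -> x <= maxR xs.
Proof.
  induction xs; simpl; intros H; [contradiction|].
  destruct H as [->|H]; [apply Rmax_l|]. eapply Rle_trans; [apply IHxs; auto| apply Rmax_r].
Qed.

Lemma vq_val k s p q : vq (2 ^ (S k + p)) q (hbar_ext k s) = INR (2 ^ S k) * IZR (dq s p q) / 2.
Proof.
  unfold vq, dq, Sv. rewrite Nat.pow_add_r.
  replace (q * (2 * (2 ^ S k * 2 ^ p)) + 2 ^ S k * 2 ^ p)%nat with (((2 * q + 1) * 2 ^ p) * 2 ^ S k)%nat by ring.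
  replace (q * (2 * (2 ^ S k * 2 ^ p)))%nat with ((2 * q * 2 ^ p) * 2 ^ S k)%nat by ring.
  replace ((2 * q * 2 ^ p) * 2 ^ S k + 2 * (2 ^ S k * 2 ^ p))%nat with (((2 * q + 2) * 2 ^ p) * 2 ^ S k)%nat by ring.
  rewrite !hbar_val. rewrite !minus_IZR, mult_IZR. simpl (IZR 2). field.
Qed.

Lemma energy_block k P D s p : (p < P)%nat ->
  scale_energy (S k + P) k (hbar_ext k s) < D ->
  lsum (fun x => IZR x ^ 2) (blk P s p) <= INR (Mlev P p) * (64 * (2 ^ p) ^ 4 * D).
Proof.
  intros Hp HE.
  set (h := hbar_ext k s).
  set (rho := (2 ^ (S k + p))%nat).
  set (M := Mlev P p).
  assert (Hr : (1 <= rho)%nat) by (unfold rho; pose proof (Nat.pow_nonzero 2 (S k + p)); lia).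
  assert (HM : (1 <= M)%nat) by (unfold M, Mlev; pose proof (Nat.pow_nonzero 2 (P - 1 - p)); lia).
  assert (HL : (2 ^ (S k + P) = M * (2 * rho))%nat).
  { unfold M, Mlev, rho. rewrite <- Nat.pow_succ_r', <- Nat.pow_add_r. f_equal. lia. }
  assert (Hmax : (INR (2 ^ k) / INR (2 ^ (S k + p))) ^ 2 * Dir (2 ^ (S k + P)) (hband (2 ^ (S k + p)) h) / INR (2 ^ (S k + P)) < D).
  { eapply Rle_lt_trans; [|exact HE]. unfold scale_energy. apply maxR_ge.
    apply in_map_iff. exists (S k + p)%nat. split; [reflexivity|]. apply in_seq. lia. }
  fold rho in Hmax. rewrite HL in Hmax.
  pose proof (Dir_lower rho M h Hr HM) as HD.
  set (E := Dir (M * (2 * rho)) (hband rho h)) in *.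
  set (Sig := lsum (fun x => IZR x ^ 2) (blk P s p)).
  assert (HU : INR (2 ^ S k) = 2 * INR (2 ^ k)) by (rewrite Nat.pow_succ_r', mult_INR; reflexivity).
  set (K2 := INR (2 ^ k)) in *.
  set (W := INR (2 ^ p)).
  assert (HK2 : 0 < K2) by (apply lt_0_INR; pose proof (Nat.pow_nonzero 2 k); lia).
  assert (HW : 0 < W) by (apply lt_0_INR; pose proof (Nat.pow_nonzero 2 p); lia).
  assert (Hrho : INR rho = 2 * K2 * W). { unfold rho, K2, W; rewrite Nat.pow_add_r, mult_INR, HU. unfold K2; ring. }
  assert (HMR : 0 < INR M) by (apply lt_0_INR; lia).
  assert (Hsum : lsum (fun q => vq rho q h ^ 2 / INR rho) (seq 0 M) = (K2 / (2 * W)) * Sig).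
  { unfold Sig, blk. fold M. rewrite lsum_map. rewrite <- lsum_scal. apply lsum_ext. intros q _.
    unfold rho, h. rewrite vq_val. fold rho. rewrite Hrho, HU. field. lra. }
  rewrite Hsum in HD.
  rewrite !mult_INR in Hmax. rewrite !Hrho in Hmax. replace (INR 2) with 2 in Hmax by reflexivity.
  assert (HW2 : W = 2 ^ p) by (unfold W; rewrite pow_INR; reflexivity).
  rewrite <- HW2.
  replace ((K2 / (2 * K2 * W)) ^ 2 * E / (INR M * (2 * (2 * K2 * W)))) with (E / (16 * W^3 * K2 * INR M)) in Hmax by (field; lra).
  assert (HX : 0 < 16 * W ^ 3 * K2 * INR M).
  { apply Rmult_lt_0_compat; [|auto]. apply Rmult_lt_0_compat; [|auto]. apply Rmult_lt_0_compat; [lra|]. apply pow_lt; auto. }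
  assert (HE2 : E < D * (16 * W ^ 3 * K2 * INR M)).
  { replace E with (E / (16 * W ^ 3 * K2 * INR M) * (16 * W ^ 3 * K2 * INR M)) by (field; lra).
    apply Rmult_lt_compat_r; [auto| exact Hmax]. }
  assert (HS : Sig <= 4 * W / K2 * E).
  { replace Sig with (4 * W / K2 * (/ 2 * (K2 / (2 * W) * Sig))) by (field; lra).
    apply Rmult_le_compat_l; [|auto]. apply Rlt_le, Rdiv_lt_0_compat; lra. }
  assert (4 * W / K2 * E <= 4 * W / K2 * (D * (16 * W ^ 3 * K2 * INR M))).
  { apply Rmult_le_compat_l; [apply Rlt_le, Rdiv_lt_0_compat; lra| lra]. }
  replace (4 * W / K2 * (D * (16 * W ^ 3 * K2 * INR M))) with (INR M * (64 * W ^ 4 * D)) in H by (field; lra).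
  lra.
Qed.

Definition nsum {A} (f : A -> nat) (l : list A) : nat := fold_right (fun a acc => (f a + acc)%nat) 0%nat l.

Lemma nsum_app {A} (f : A -> nat) l1 l2 : nsum f (l1 ++ l2) = (nsum f l1 + nsum f l2)%nat.
Proof. induction l1; simpl; auto. rewrite IHl1; lia. Qed.

Lemma nsum_ext {A} (f g : A -> nat) l : (forall x, In x l -> f x = g x) -> nsum f l = nsum g l.
Proof. induction l; simpl; intros H; [auto|]. rewrite H by (left; auto). rewrite IHl; auto. Qed.

Lemma nsum_scal {A} c (f : A -> nat) l : nsum (fun x => c * f x)%nat l = (c * nsum f l)%nat.
Proof. induction l; simpl; auto. rewrite IHl; lia. Qed.

Lemma exp_sum_bound P : (nsum (fun p => 2 ^ (P - 1 - p) * (4 * p + 11)) (seq 0 P) + 4 * P + 15 <= 15 * 2 ^ P)%nat.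
Proof.
  induction P; [simpl; lia|].
  rewrite (seq_S P 0), nsum_app. simpl (nsum _ (_ :: nil)).
  replace (S P - 1 - (0 + P))%nat with 0%nat by lia.
  rewrite (nsum_ext _ (fun p => 2 * (2 ^ (P - 1 - p) * (4 * p + 11)))%nat).
  - rewrite nsum_scal. rewrite Nat.pow_succ_r'. simpl (2 ^ 0)%nat. replace (P - 0 - P)%nat with 0%nat by lia. simpl (2 ^ 0)%nat. lia.
  - intros p Hp. apply in_seq in Hp. replace (S P - 1 - p)%nat with (S (P - 1 - p)) by lia.
    rewrite Nat.pow_succ_r'. lia.
Qed.

Lemma boxprod_app Rg a b : boxprod Rg (a ++ b) = boxprod Rg a * boxprod Rg b.
Proof. induction a; simpl; [lra|]. unfold boxprod in *. simpl. rewrite IHa. lra. Qed.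

Lemma boxprod_repeat Rg g m : boxprod Rg (repeat g m) = lsum g Rg ^ m.
Proof. induction m; simpl; [reflexivity|]. unfold boxprod in *; simpl. rewrite IHm. reflexivity. Qed.

Lemma boxprod_nonneg Rg gs : (forall g, In g gs -> forall x, 0 <= g x) -> 0 <= boxprod Rg gs.
Proof.
  induction gs; intros H; unfold boxprod; simpl; [lra|]. fold (boxprod Rg gs).
  apply Rmult_le_pos; [apply lsum_nonneg; apply H; left; auto| apply IHgs; intros; apply H; right; auto].
Qed.

Lemma boxprod_fm Rg (G : nat -> Z -> R) (Mf e : nat -> nat) D l :
  1 <= D -> (forall p x, 0 <= G p x) ->
  (forall p, In p l -> lsum (G p) Rg <= D ^ (e p)) ->
  boxprod Rg (flat_map (fun p => repeat (G p) (Mf p)) l) <= D ^ (nsum (fun p => Mf p * e p)%nat l).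
Proof.
  intros HD HG; induction l; simpl; intros H; [lra|].
  rewrite boxprod_app, boxprod_repeat, pow_add.
  assert (H1 := H a (or_introl eq_refl)).
  apply Rmult_le_compat.
  - apply pow_le. apply lsum_nonneg; auto.
  - apply boxprod_nonneg. intros g Hg x. apply in_flat_map in Hg. destruct Hg as [p [_ Hp]].
    apply repeat_spec in Hp. subst; auto.
  - rewrite Nat.mul_comm, pow_mult. apply pow_incr. split; auto. apply lsum_nonneg; auto.
  - apply IHl; auto.
Qed.

Lemma prodw_fm (G : nat -> list (Z -> R)) (B : nat -> list Z) l :
  (forall p, length (G p) = length (B p)) ->
  (forall p, In p l -> 1 <= prodw (G p) (B p)) ->
  1 <= prodw (flat_map G l) (flat_map B l).
Proof.
  intros HL; induction l; simpl; intros H; [lra|].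
  rewrite prodw_app by auto.
  assert (1 <= prodw (G a) (B a)) by auto.
  assert (1 <= prodw (flat_map G l) (flat_map B l)) by auto.
  nra.
Qed.

Lemma length_fm {A B B'} (f : A -> list B) (g : A -> list B') l :
  (forall p, length (f p) = length (g p)) -> length (flat_map f l) = length (flat_map g l).
Proof. intros H; induction l; simpl; auto. rewrite !length_app, H, IHl; auto. Qed.

Lemma c_bound (D : R) p : 2 <= D -> 6 * (1 + 64 * (2 ^ p) ^ 4 * D) <= D ^ (4 * p + 11).
Proof.
  intros HD. rewrite <- pow_mult.
  assert (HY : 1 <= 2 ^ (p * 4)) by (apply pow_R1_Rle; lra).
  replace (4 * p + 11)%nat with ((p * 4 + 10) + 1)%nat by lia.
  rewrite !pow_add. simpl (D ^ 1).
  assert (2 ^ (p * 4) * 2 ^ 10 <= D ^ (p * 4) * D ^ 10).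
  { rewrite <- !pow_add. apply pow_incr. lra. }
  simpl (2 ^ 10) in H. nra.
Qed.

Lemma ln0 : ln (INR 0) = 0.
Proof. rewrite INR_0. unfold ln. destruct (Rlt_dec 0 0) as [Hr|Hr]. exfalso; exact (Rlt_irrefl 0 Hr). reflexivity. Qed.

Lemma ln_le' x y : 0 < x -> x <= y -> ln x <= ln y.
Proof. intros Hx [H|H]; [left; apply ln_increasing; auto| subst; lra]. Qed.

Theorem lemma8 :
  exists C : R,
    forall (n k : nat) (Dhat : R),
      (1 <= n)%nat -> (k < n)%nat -> C <= Dhat ->
      forall S : list (list Z),
        NoDup S ->
        (forall s, In s S -> is_hbar n k s /\ scale_energy n k (hbar_ext k s) < Dhat) ->
        ln (INR (length S)) <= C * (INR (2 ^ n) / INR (2 ^ k)) * ln Dhat.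
Proof.
  exists 15. intros n k D Hn Hk HD Sl HND HS.
  destruct (Nat.le_exists_sub (S k) n Hk) as [P [HnP _]].
  rewrite Nat.add_comm in HnP. subst n.
  assert (HD1 : 2 <= D) by lra.
  set (c := fun p : nat => 1 + 64 * (2 ^ p) ^ 4 * D).
  assert (Hc : forall p, 1 <= c p).
  { intros p. unfold c. assert (0 < (2 ^ p) ^ 4) by (apply pow_lt, pow_lt; lra). nra. }
  set (G := fun p (x : Z) => c p / (1 + IZR x ^ 2)).
  assert (HG : forall p x, 0 <= G p x).
  { intros p x. unfold G. apply Rlt_le, Rdiv_lt_0_compat; [specialize (Hc p); lra|].
    pose proof (pow2_ge_0 (IZR x)); lra. }
  set (gs := flat_map (fun p => repeat (G p) (Mlev P p)) (seq 0 P)).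
  set (T := map (Phi P) Sl).
  assert (HN : (2 ^ (S k + P) / 2 ^ S k = 2 ^ P)%nat).
  { rewrite Nat.pow_add_r, Nat.mul_comm, Nat.div_mul; auto. apply Nat.pow_nonzero; lia. }
  assert (Hh : forall s, In s Sl -> length s = (2 ^ P + 1)%nat /\ Sv s 0 = 0%Z /\ Sv s (2 ^ P) = 0%Z).
  { intros s Hs. destruct (HS s Hs) as [[H1 [H2 H3]] _]. rewrite HN in H1, H3. auto. }
  assert (HNT : NoDup T).
  { apply NoDup_map_NoDup_ForallPairs; auto.
    intros x y Hx Hy Heq. destruct (Hh x Hx) as [? [? ?]]. destruct (Hh y Hy) as [? [? ?]].
    apply (Phi_inj P); auto. }
  destruct (bound_exists T) as [K HK].
  assert (Hcount : INR (length T) <= boxprod (rangeZ K) gs).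
  { apply count_bound; auto.
    - intros g Hg x. unfold gs in Hg. apply in_flat_map in Hg. destruct Hg as [p [_ Hp]].
      apply repeat_spec in Hp. subst; auto.
    - intros t Ht. split; [|split].
      + unfold T in Ht. apply in_map_iff in Ht. destruct Ht as [s [<- _]].
        unfold Phi, gs. apply length_fm. intros p. unfold blk. rewrite length_map, length_seq, repeat_length. auto.
      + intros x Hx. apply in_rangeZ. apply (HK t); auto.
      + unfold T in Ht. apply in_map_iff in Ht. destruct Ht as [s [<- Hs]].
        unfold Phi, gs. apply prodw_fm.
        * intros p. unfold blk. rewrite length_map, length_seq, repeat_length. auto.
        * intros p Hp. apply in_seq in Hp.
          replace (Mlev P p) with (length (blk P s p)) at 1 by (unfold blk; rewrite length_map, length_seq; auto).
          apply block_weight1; auto.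
          replace (INR (length (blk P s p))) with (INR (Mlev P p)) by (unfold blk; rewrite length_map, length_seq; auto).
          unfold c. replace (1 + 64 * (2 ^ p) ^ 4 * D - 1) with (64 * (2 ^ p) ^ 4 * D) by ring.
          apply (energy_block k P D s p); [lia|]. apply (HS s Hs). }
  assert (Hbox : boxprod (rangeZ K) gs <= D ^ (15 * 2 ^ P)).
  { eapply Rle_trans.
    - unfold gs. apply (boxprod_fm _ G (Mlev P) (fun p => 4 * p + 11)%nat D); [lra|auto|].
      intros p _. apply Rle_trans with (c p * 6).
      + rewrite (lsum_ext _ (fun x => c p * (1 / (1 + IZR x ^ 2)))).
        * rewrite lsum_scal. apply Rmult_le_compat_l; [specialize (Hc p); lra| apply rangeZ_sum].
        * intros x _. unfold G. field. pose proof (pow2_ge_0 (IZR x)); lra.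
      + rewrite Rmult_comm. apply c_bound; auto.
    - apply Rle_pow; [lra|]. pose proof (exp_sum_bound P). unfold Mlev. lia. }
  assert (HlnD : 0 <= ln D).
  { rewrite <- ln_1. apply ln_le'; lra. }
  assert (H2P : INR (2 ^ (S k + P)) / INR (2 ^ k) = 2 * INR (2 ^ P)).
  { rewrite Nat.pow_add_r, Nat.pow_succ_r', !mult_INR. simpl (INR 2).
    assert (0 < INR (2 ^ k)) by (apply lt_0_INR; pose proof (Nat.pow_nonzero 2 k); lia). field. lra. }
  rewrite H2P.
  assert (HP0 : 0 <= INR (2 ^ P)) by apply pos_INR.
  unfold T in Hcount. rewrite length_map in Hcount.
  destruct (Nat.eq_dec (length Sl) 0) as [H0|H0].
  - rewrite H0. rewrite ln0.
    apply Rmult_le_pos; [|auto]. lra.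
  
  - assert (0 < INR (length Sl)) by (apply lt_0_INR; lia).
    eapply Rle_trans; [apply ln_le'; [auto| eapply Rle_trans; [exact Hcount| exact Hbox]]|].
    rewrite ln_pow by lra. rewrite mult_INR. simpl (INR 15).
    replace (INR 15) with 15 by (simpl; ring).
    nra.
Qed.
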